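(* Let $u_1,u_2\in\mathcal U$ belong to the same group $C_k$ and satisfy $R(u_1)\ge R(u_2)$. If $F$ is a maxmin-fair distribution over the set $\mathcal S$ of valid rankings (for the satisfaction function $A=V$), then $$\mathbb E_{r\sim F}[f(r(u_1))]\ \ge\ \mathbb E_{r\sim F}[f(r(u_2))].$$
   Context: Ranking setting: $\mathcal U=\{u_1,\dots,u_n\}$ is a finite set of $n$ individuals, partitioned into groups $C_1,\dots,C_t$. $R:\mathcal U\to\mathbb R$ is a relevance function with pairwise distinct values. A ranking is a bijection $r:\mathcal U\to[n]$; $r(u)$ is the position of $u$. For each $i\in[n]$ and $k\in[t]$ there are integers $l_i^k\le u_i^k$, and the set of valid rankings is $\mathcal S=\{r : l_i^k\le |\{u\in C_k: r(u)\le i\}|\le u_i^k\ \forall i\in[n],k\in[t]\}$, assumed nonempty. The value function is $V(r,u)=f(r(u))-g(u)$, where $f:[n]\to\mathbb R$ is non-increasing ($f(1)\ge f(2)\ge\dots\ge f(n)$) and $g:\mathcal U\to\mathbb R$ is increasing in relevance, i.e. $R(u)\ge R(v)\Rightarrow g(u)\ge g(v)$. Maxmin-fairness: for a finite nonempty set $\mathcal S$ of solutions, a finite set $\mathcal U$ of individuals and a satisfaction function $A:\mathcal S\times\mathcal U\to\mathbb R$, for a probability distribution $D$ over $\mathcal S$ write $D[u]=\mathbb E_{S\sim D}[A(S,u)]$. A distribution $F$ over $\mathcal S$ is maxmin-fair for $(\mathcal U,A)$ if for every distribution $D$ over $\mathcal S$ and every $u\in\mathcal U$: if $D[u]>F[u]$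 then there exists $v\in\mathcal U$ with $D[v]<F[v]\le F[u]$. (Equivalently, the vector of values $(F[u])_{u\in\mathcal U}$ sorted increasingly is lexicographically $\ge$ the corresponding sorted vector of every distribution $D$.) Here $A=V$. *)

(* Defs.v *)
From HB Require Import structures.
From mathcomp Require Import all_boot all_order all_algebra.
Set Implicit Arguments. Unset Strict Implicit. Unset Printing Implicit Defensive.
Import Order.TTheory GRing.Theory Num.Theory.
Local Open Scope ring_scope.

(* A ranking of the individuals U is a bijection U -> [n], n = #|U|.
   Positions are 0-based: position p : 'I_n stands for the paper's p+1. *)
Definition ranking (U : finType) := {ffun U -> 'I_#|U|}.

(* r is a bijection (injective suffices since #|U| = #|'I_#|U||). *)
Definition is_ranking (U : finType) (r : ranking U) : bool := injectiveb r.

(* Number of members of group k among the first i+1 positions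
   (paper: |{u in C_k : r(u) <= i+1}|). *)
Definition prefix_count (U : finType) (t : nat) (grp : U -> 'I_t)
  (r : ranking U) (i : 'I_#|U|) (k : 'I_t) : nat :=
  #|[set u | (grp u == k) && (r u <= i)%N]|.

Definition valid_ranking (U : finType) (t : nat) (grp : U -> 'I_t)
  (lo hi : 'I_#|U| -> 'I_t -> int) (r : ranking U) : bool :=
  is_ranking r &&
  [forall i : 'I_#|U|, forall k : 'I_t,
     (lo i k <= (prefix_count grp r i k)%:Z) &&
     ((prefix_count grp r i k)%:Z <= hi i k)].

Definition is_distr_on (R : numDomainType) (T : finType) (P : pred T)
  (D : {ffun T -> R}) : Prop :=
  (forall x, 0 <= D x) /\ (forall x, ~~ P x -> D x = 0) /\ \sum_x D x = 1.

Definition expect (R : numDomainType) (T U : finType) (D : {ffun T -> R})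
  (A : T -> U -> R) (u : U) : R :=
  \sum_(x : T) D x * A x u.

Definition maxmin_fair (R : numDomainType) (T U : finType) (P : pred T)
  (A : T -> U -> R) (F : {ffun T -> R}) : Prop :=
  is_distr_on P F /\
  (forall D : {ffun T -> R}, is_distr_on P D ->
    forall u : U, expect F A u < expect D A u ->
      exists v : U, expect D A v < expect F A v /\ expect F A v <= expect F A u)%type.

Definition value (R : numDomainType) (U : finType) (f : 'I_#|U| -> R)
  (g : U -> R) (r : ranking U) (u : U) : R := f (r u) - g u.

(* Main.v *)
Require Import Defs.
From HB Require Import structures.
From mathcomp Require Import all_boot all_order all_algebra.
From mathcomp Require Import all_fingroup lra.
Import Order.TTheory GRing.Theory Num.Theory.
Local Open Scope ring_scope.

Theorem theorem1 (R : realFieldType) (U : finType) (t : nat)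
  (grp : U -> 'I_t) (lo hi : 'I_#|U| -> 'I_t -> int)
  (Rel : U -> R) (f : 'I_#|U| -> R) (g : U -> R)
  (Rel_inj : injective Rel)
  (f_noninc : forall i j : 'I_#|U|, (i <= j)%N -> f j <= f i)
  (g_mono : forall u v : U, Rel v <= Rel u -> g v <= g u)
  (S_nonempty : exists r : ranking U, valid_ranking grp lo hi r)
  (F : {ffun ranking U -> R})
  (F_fair : maxmin_fair (valid_ranking grp lo hi) (value f g) F)
  (u1 u2 : U) (same_group : grp u1 = grp u2) (rel12 : Rel u2 <= Rel u1) :
  \sum_(r : ranking U) F r * f (r u2) <= \sum_(r : ranking U) F r * f (r u1).
Proof.
set sw := tperm u1 u2.
have grp_sw : forall u, grp (sw u) = grp u.
  by move=> u; rewrite /sw; case: tpermP => // ->.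
pose swapr (r : ranking U) : ranking U := [ffun u => r (sw u)].
have swaprK : forall r, swapr (swapr r) = r.
  by move=> r; apply/ffunP => u; rewrite !ffunE tpermK.
have swinj : injective swapr := can_inj swaprK.
have valid_sw : forall r, valid_ranking grp lo hi r ->
    valid_ranking grp lo hi (swapr r).
  move=> r /andP [inj cnt]; apply/andP; split.
    apply/injectiveP => x y; rewrite !ffunE => /(injectiveP _ inj).
    exact: perm_inj.
  apply/forallP => i; apply/forallP => k.
  move: (forallP cnt i) => /forallP /(_ k).
  suff -> : prefix_count grp (swapr r) i k = prefix_count grp r i k by [].
  rewrite /prefix_count.
  have -> : [set u | (grp u == k) && (swapr r u <= i)%N]
      = sw @^-1: [set u | (grp u == k) && (r u <= i)%N].
    by apply/setP => u; rewrite !inE ffunE grp_sw.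
  by rewrite card_preimset //; exact: perm_inj.
pose D : {ffun ranking U -> R} := [ffun r => F (swapr r)].
case: F_fair => [[F0 [Fout F1]] fair].
have Ddistr : is_distr_on (valid_ranking grp lo hi) D.
  split; first by move=> x; rewrite ffunE.
  split.
    move=> x Hx; rewrite ffunE; apply: Fout; apply/negP => /valid_sw.
    by rewrite swaprK; apply/negP.
  rewrite (reindex_inj swinj) /=.
  by under eq_bigr do rewrite ffunE swaprK.
pose E u := \sum_(r : ranking U) F r * f (r u).
have EF : forall u, expect F (value f g) u = E u - g u.
  move=> u; rewrite /expect /value.
  under eq_bigr do rewrite mulrBr.
  by rewrite sumrB -mulr_suml F1 mul1r.
have ED : forall u, expect D (value f g) u = E (sw u) - g u.
  move=> u; rewrite /expect (reindex_inj swinj) /=.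
  under eq_bigr do rewrite ffunE swaprK /value ffunE mulrBr.
  by rewrite sumrB -mulr_suml F1 mul1r.
have g12 : g u2 <= g u1 by apply: g_mono.
rewrite leNgt; apply/negP => Hlt.
have H1 : expect F (value f g) u1 < expect D (value f g) u1.
  rewrite EF ED /sw tpermL. rewrite /E. lra.
have [v [Hv1 Hv2]] := fair D Ddistr u1 H1.
move: Hv1 Hv2; rewrite !EF !ED.
case: (eqVneq v u1) => [->|n1]; first by rewrite /sw tpermL /E; lra.
case: (eqVneq v u2) => [->|n2]; first by rewrite /sw tpermR /E; lra.
rewrite /sw tpermD 1?eq_sym //; lra.
Qed.
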